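(* Let $A^1,\ldots,A^M\in\mathbb{R}^{m,n}$ be matrices whose columns have Euclidean norm $1$. If \[ M-2\sum_{1\le i<j\le M}\mathcal{M}_D(A^i,A^j)>0, \] then \[ \mathcal{M}\Bigl(\sum_{i=1}^M A^i\Bigr)\le\frac{\sum_{i=1}^M\mathcal{M}(A^i)+2\sum_{1\le i<j\le M}\mathcal{M}_{OD}(A^i,A^j)}{M-2\sum_{1\le i<j\le M}\mathcal{M}_D(A^i,A^j)}. \]
   Context: For $C=[c_1,\ldots,c_n]$ with columns of norm $1$, $\mathcal{M}(C)=\max_{i\ne j}|\langle c_i,c_j\rangle|$. For a matrix $C=[c_1,\ldots,c_n]$ with nonzero but not necessarily normalized columns (such as $\sum_i A^i$), $\mathcal{M}(C)$ means $\max_{i\ne j}\frac{|\langle c_i,c_j\rangle|}{\|c_i\|_2\|c_j\|_2}$. For $A=[a_1,\ldots,a_n]$, $B=[b_1,\ldots,b_n]$ with normalized columns, $\mathcal{M}_{OD}(A,B)=\max_{i\ne j}|\langle a_i,b_j\rangle|$ and $\mathcal{M}_D(A,B)=\max_i|\langle a_i,b_i\rangle|$. *)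

(* Defs.v *)
From mathcomp Require Import all_boot all_order all_algebra.
Set Implicit Arguments. Unset Strict Implicit. Unset Printing Implicit Defensive.
Import Order.TTheory GRing.Theory Num.Theory.
Local Open Scope ring_scope.

Definition coldot (R : rcfType) (m n : nat) (A B : 'M[R]_(m, n)) (i j : 'I_n) : R :=
  \sum_(k < m) A k i * B k j.

Definition colnorm (R : rcfType) (m n : nat) (A : 'M[R]_(m, n)) (i : 'I_n) : R :=
  Num.sqrt (coldot A A i i).

Definition unit_columns (R : rcfType) (m n : nat) (A : 'M[R]_(m, n)) : Prop :=
  forall i : 'I_n, colnorm A i = 1.

(* Mutual coherence, normalized version: max_{i<>j} |<c_i,c_j>|/(||c_i|| ||c_j||).
   For unit-norm columns this is max_{i<>j} |<c_i,c_j>|.  The empty max is 0. *)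
Definition coherence (R : rcfType) (m n : nat) (C : 'M[R]_(m, n)) : R :=
  \big[Num.max/0]_(i < n) \big[Num.max/0]_(j < n | i != j)
     (`|coldot C C i j| / (colnorm C i * colnorm C j)).

Definition coherence_OD (R : rcfType) (m n : nat) (A B : 'M[R]_(m, n)) : R :=
  \big[Num.max/0]_(i < n) \big[Num.max/0]_(j < n | i != j) `|coldot A B i j|.

Definition coherence_D (R : rcfType) (m n : nat) (A B : 'M[R]_(m, n)) : R :=
  \big[Num.max/0]_(i < n) `|coldot A B i i|.

(* Main.v *)
Require Import Defs.
From mathcomp Require Import all_boot all_order all_algebra.
From mathcomp Require Import lra.
Set Implicit Arguments. Unset Strict Implicit.
Import Order.TTheory GRing.Theory Num.Theory.
Local Open Scope ring_scope.

Lemma bigmax_ge (R : realDomainType) (n : nat) (P : pred 'I_n) (F : 'I_n -> R) i0 :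
  P i0 -> F i0 <= \big[Num.max/0]_(i < n | P i) F i.
Proof. by move=> Pi; rewrite (bigD1 i0) //= le_max lexx. Qed.

Lemma bigmax_ge0 (R : realDomainType) (n : nat) (P : pred 'I_n) (F : 'I_n -> R) :
  0 <= \big[Num.max/0]_(i < n | P i) F i.
Proof. by apply: (big_rec (fun x => 0 <= x)) => // i x _ hx; rewrite le_max hx orbT. Qed.

Lemma bigmax_le (R : realDomainType) (n : nat) (P : pred 'I_n) (F : 'I_n -> R) X :
  0 <= X -> (forall i, P i -> F i <= X) -> \big[Num.max/0]_(i < n | P i) F i <= X.
Proof.
move=> h0 hF; apply: (big_ind (fun x => x <= X)) => // x y hx hy.
by rewrite ge_max hx hy.
Qed.

Lemma sum_pairs (R : comPzRingType) (M : nat) (f : 'I_M -> 'I_M -> R) :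
  \sum_(l < M) \sum_(k < M) f l k =
  \sum_(l < M) f l l + \sum_(l < M) \sum_(k < M | (l < k)%N) (f l k + f k l).
Proof.
have E : forall l : 'I_M, \sum_(k < M) f l k =
   f l l + \sum_(k < M | (l < k)%N) f l k + \sum_(k < M | (k < l)%N) f l k.
  move=> l; rewrite (bigD1 l) //= -addrA; congr (_ + _).
  rewrite (bigID (fun k : 'I_M => (l < k)%N)) /=; congr (_ + _).
    by apply: eq_bigl => k; rewrite -val_eqE /=; case: ltngtP.
  by apply: eq_bigl => k; rewrite -val_eqE /=; case: ltngtP.
rewrite (eq_bigr _ (fun l _ => E l)) big_split big_split /= -addrA; congr (_ + _).
under [RHS]eq_bigr => l _ do rewrite big_split /=.
rewrite big_split /=; congr (_ + _).
rewrite (exchange_big_dep xpredT) //=.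
Qed.

Lemma coldot_sum (R : rcfType) (m n M : nat) (A : 'I_M -> 'M[R]_(m, n)) p q :
  coldot (\sum_(l < M) A l) (\sum_(l < M) A l) p q =
  \sum_(l < M) \sum_(k < M) coldot (A l) (A k) p q.
Proof.
rewrite /coldot.
under eq_bigr => r _ do rewrite !summxE mulr_suml.
rewrite exchange_big /=; apply: eq_bigr => l _.
under eq_bigr => r _ do rewrite mulr_sumr.
by rewrite exchange_big.
Qed.

Lemma coldot_ge0 (R : rcfType) (m n : nat) (A : 'M[R]_(m, n)) i :
  0 <= coldot A A i i.
Proof. by apply: sumr_ge0 => k _; rewrite -expr2 sqr_ge0. Qed.

Lemma coldot_unit (R : rcfType) (m n : nat) (A : 'M[R]_(m, n)) i :
  colnorm A i = 1 -> coldot A A i i = 1.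
Proof.
by move=> h; rewrite -(sqr_sqrtr (coldot_ge0 A i)) -/(colnorm A i) h expr1n.
Qed.

Lemma coldot_swap (R : rcfType) (m n : nat) (A B : 'M[R]_(m, n)) p q :
  coldot B A p q = coldot A B q p.
Proof. by apply: eq_bigr => r _; rewrite mulrC. Qed.

Theorem corollary4p6 (R : rcfType) (m n M : nat) (A : 'I_M -> 'M[R]_(m, n)) :
  (forall l : 'I_M, unit_columns (A l)) ->
  0 < M%:R - 2 * \sum_(i < M) \sum_(j < M | (i < j)%N) coherence_D (A i) (A j) ->
  coherence (\sum_(l < M) A l) <=
    (\sum_(i < M) coherence (A i)
       + 2 * \sum_(i < M) \sum_(j < M | (i < j)%N) coherence_OD (A i) (A j))
    / (M%:R - 2 * \sum_(i < M) \sum_(j < M | (i < j)%N) coherence_D (A i) (A j)).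

Proof.
move=> hU.
set S := \sum_(l < M) A l.
set N := (X in X / _).
set D := (X in _ / X) => hD0.
rewrite -/D in hD0.
have hD : forall p, D <= coldot S S p p.
  move=> p; rewrite /S coldot_sum sum_pairs.
  rewrite (eq_bigr (fun _ => 1)); last by move=> l _; apply: coldot_unit; apply: hU.
  rewrite sumr_const card_ord /D.
  have H : \sum_(i < M) \sum_(j < M | (i < j)%N)
        - (coldot (A i) (A j) p p + coldot (A j) (A i) p p) <=
      2 * \sum_(i < M) \sum_(j < M | (i < j)%N) coherence_D (A i) (A j).
    rewrite mulr_sumr; apply: ler_sum => l _; rewrite mulr_sumr.
    apply: ler_sum => k _; rewrite [coldot (A k) (A l) _ _]coldot_swap.
    have h1 : `|coldot (A l) (A k) p p| <= coherence_D (A l) (A k).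
      exact: (@bigmax_ge _ _ xpredT (fun i => `|coldot (A l) (A k) i i|) p isT).
    have h2 : - coldot (A l) (A k) p p <= `|coldot (A l) (A k) p p|.
      by rewrite ler_normr lexx orbT.
    lra.
  move: H.
  under eq_bigr => l _ do rewrite sumrN.
  rewrite sumrN => H; lra.
have hN : forall p q, p != q -> `|coldot S S p q| <= N.
  move=> p q pq; rewrite /S coldot_sum sum_pairs /N.
  apply: le_trans (ler_normD _ _) _; apply: lerD.
    apply: le_trans (ler_norm_sum _ _ _) _; apply: ler_sum => l _.
    apply: le_trans (@bigmax_ge _ _ xpredT _ p isT).
    apply: le_trans (@bigmax_ge _ _ (fun j => p != j) _ q pq).
    by rewrite !hU mulr1 divr1.
  rewrite mulr_sumr.
  apply: le_trans (ler_norm_sum _ _ _) _; apply: ler_sum => l _.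
  rewrite mulr_sumr.
  apply: le_trans (ler_norm_sum _ _ _) _; apply: ler_sum => k _.
  apply: le_trans (ler_normD _ _) _; rewrite mulr_natl mulr2n; apply: lerD.
    apply: le_trans (@bigmax_ge _ _ xpredT _ p isT).
    exact: (@bigmax_ge _ _ (fun j => p != j) (fun j => `|coldot (A l) (A k) p j|) q pq).
  rewrite coldot_swap.
  apply: le_trans (@bigmax_ge _ _ xpredT _ q isT).
  by apply: (@bigmax_ge _ _ (fun j => q != j) (fun j => `|coldot (A l) (A k) q j|) p); rewrite eq_sym.
have N0 : 0 <= N.
  rewrite /N; apply: addr_ge0; first by apply: sumr_ge0 => i _; exact: bigmax_ge0.
  apply: mulr_ge0 => //; apply: sumr_ge0 => i _; apply: sumr_ge0 => j _.
  exact: bigmax_ge0.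
have ND0 : 0 <= N / D by apply: divr_ge0 => //; apply: ltW.
apply: bigmax_le => // p _; apply: bigmax_le => // q pq.
have hs : forall r, Num.sqrt D <= colnorm S r.
  by move=> r; rewrite /colnorm ler_sqrt ?hD // (le_trans (ltW hD0) (hD r)).
have hP : D <= colnorm S p * colnorm S q.
  rewrite -{1}(sqr_sqrtr (ltW hD0)) expr2.
  by apply: ler_pM; rewrite ?sqrtr_ge0 ?hs.
have P0 : 0 < colnorm S p * colnorm S q by apply: lt_le_trans hP.
apply: (@le_trans _ _ (N / (colnorm S p * colnorm S q))).
  by apply: ler_wpM2r; [rewrite invr_ge0 ltW | exact: hN].
apply: ler_wpM2l => //.
by rewrite lef_pV2 ?posrE.
Qed.
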